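(* Let $G=(V,E)$ be a directed acyclic graph under the LT model with edge weights $w$ satisfying $\sum_{x\in\mathrm{In}(v)}w_{(x,v)}\le1$ for every $v\in V$, and let $L$ be the length of a longest directed path in $G$. Taking $p_{(x,y)}=w_{(x,y)}$ in the EaSyIM recursion, for every $l\ge L$ and every $u\in V$ the EaSyIM score satisfies $\Delta^l(u)=\sigma(\{u\})$; equivalently, $\sigma(\{u\})=\sum_{\rho}\prod_{e\in\rho}w_e$, the sum ranging over all directed paths $\rho$ of length at least $1$ starting at $u$.
   Context: LT model: each node $v$ draws a threshold $\theta_v$ uniformly from $[0,1]$; seeds are active initially, and an inactive $v$ becomes active once $\sum_{u\in\mathrm{In}(v),\,u\text{ active}}w_{(u,v)}\ge\theta_v$; active nodes stay active. $\sigma(S)$ denotes the expected number of active nodes at the end of the process that are not in $S$. EaSyIM score: $\Delta^0(u)=0$ for all $u$, and for $i\ge1$, $\Delta^i(u)=\sum_{v\in\mathrm{Out}(u)}p_{(u,v)}\big(1+\Delta^{i-1}(v)\big)$, where $\mathrm{Out}(u)$ is the set of out-neighbours of $u$ and $\mathrm{In}(v)$ the set of in-neighbours of $v$. *)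

(* Defs.v *)
From Stdlib Require Import Reals List Arith Bool.
Import ListNotations.
Open Scope R_scope.

(* Graph G = (V,E): vertices are 0..n-1, edges given by a boolean relation
   E on nat (assumed to stay inside V), weights w : nat -> nat -> R. *)

Definition lsum (f : nat -> R) (l : list nat) : R :=
  fold_right (fun x acc => f x + acc) 0 l.

Definition verts (n : nat) : list nat := seq 0 n.

(* x :: p is a directed path (walk) x -> p1 -> p2 -> ...; its length is
   length p *)
Fixpoint is_pathb (E : nat -> nat -> bool) (x : nat) (p : list nat) : bool :=
  match p with
  | nil => true
  | y :: p' => E x y && is_pathb E y p'
  end.

Definition acyclic (E : nat -> nat -> bool) : Prop :=
  forall x p, p <> nil -> is_pathb E x p = true -> last p x <> x.

Definition longest_path_length (E : nat -> nat -> bool) (L : nat) : Prop :=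
  (exists x p, is_pathb E x p = true /\ length p = L) /\
  (forall x p, is_pathb E x p = true -> (length p <= L)%nat).

Fixpoint path_weight (w : nat -> nat -> R) (x : nat) (p : list nat) : R :=
  match p with
  | nil => 1
  | y :: p' => w x y * path_weight w y p'
  end.

Fixpoint all_lists (n k : nat) : list (list nat) :=
  match k with
  | O => [nil]
  | S k' => flat_map (fun v => map (fun p => v :: p) (all_lists n k')) (verts n)
  end.

Definition lsumL (f : list nat -> R) (l : list (list nat)) : R :=
  fold_right (fun x acc => f x + acc) 0 l.

Definition path_sum (n : nat) (E : nat -> nat -> bool) (w : nat -> nat -> R)
  (L u : nat) : R :=
  lsum (fun k => lsumL (fun p => if is_pathb E u p then path_weight w u p else 0)
                       (all_lists n k)) (seq 1 L).

Fixpoint easyim (n : nat) (E : nat -> nat -> bool) (p : nat -> nat -> R)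
  (i u : nat) : R :=
  match i with
  | O => 0
  | S i' => lsum (fun v => if E u v then p u v * (1 + easyim n E p i' v) else 0)
                 (verts n)
  end.

Definition in_active_weight (n : nat) (E : nat -> nat -> bool) (w : nat -> nat -> R)
  (act : nat -> bool) (v : nat) : R :=
  lsum (fun u => if E u v && act u then w u v else 0) (verts n).

Fixpoint lt_active (n : nat) (E : nat -> nat -> bool) (w : nat -> nat -> R)
  (theta : nat -> R) (seed : nat -> bool) (k : nat) : nat -> bool :=
  match k with
  | O => seed
  | S k' => fun v =>
      lt_active n E w theta seed k' v ||
      (if Rle_dec (theta v) (in_active_weight n E w (lt_active n E w theta seed k') v)
       then true else false)
  end.

(* number of nodes active at the end (n rounds suffice: the active set is
   monotone and has at most n elements) that are not seeds *)
Definition lt_spread (n : nat) (E : nat -> nat -> bool) (w : nat -> nat -> R)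
  (seed : nat -> bool) (theta : nat -> R) : R :=
  lsum (fun v => if lt_active n E w theta seed n v && negb (seed v) then 1 else 0)
       (verts n).

(* sum of F g over all g : {0..m-1} -> {0..N-1} (g is 0 outside) *)
Fixpoint grid_sum (N m : nat) (F : (nat -> nat) -> R) : R :=
  match m with
  | O => F (fun _ => O)
  | S m' => grid_sum N m' (fun g =>
              lsum (fun k => F (fun v => if Nat.eqb v m' then k else g v)) (seq 0 N))
  end.

(* midpoint Riemann sum, mesh 1/N, of F over the cube [0,1]^n *)
Definition cube_riemann (n N : nat) (F : (nat -> R) -> R) : R :=
  grid_sum N n (fun g => F (fun v => (2 * INR (g v) + 1) / (2 * INR N)))
  / (INR N ^ n).

(* sigma(seed) = s : the expected spread, i.e. the integral over the
   thresholds theta uniform on [0,1]^V, is s.  The integrand is a bounded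
   step function with finitely many hyperplane discontinuities, so it is
   Riemann integrable and its integral is the limit of the midpoint sums. *)
Definition sigma_is (n : nat) (E : nat -> nat -> bool) (w : nat -> nat -> R)
  (seed : nat -> bool) (s : R) : Prop :=
  Un_cv (fun N => cube_riemann n (S N) (lt_spread n E w seed)) s.

(* Main.v *)
Require Import Defs.
From Stdlib Require Import Reals List Arith Lia Lra FunctionalExtensionality Bool.
Import ListNotations.
Open Scope R_scope.

Lemma lsum_cons f x l : lsum f (x::l) = f x + lsum f l.
Proof. reflexivity. Qed.
Lemma lsum_nil f : lsum f [] = 0.
Proof. reflexivity. Qed.

Lemma lsum_app f l1 l2 : lsum f (l1++l2) = lsum f l1 + lsum f l2.
Proof. induction l1; simpl; rewrite ?lsum_nil, ?lsum_cons; [lra|]. rewrite IHl1; ring. Qed.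

Lemma lsum_ext_in f g l : (forall x, In x l -> f x = g x) -> lsum f l = lsum g l.
Proof. induction l; intros H; rewrite ?lsum_nil, ?lsum_cons; auto.
  rewrite H by (left; auto). rewrite IHl; auto. intros; apply H; right; auto. Qed.

Lemma lsum_add f g l : lsum (fun x => f x + g x) l = lsum f l + lsum g l.
Proof. induction l; rewrite ?lsum_nil, ?lsum_cons; [lra|]. rewrite IHl; ring. Qed.

Lemma lsum_scale c f l : lsum (fun x => c * f x) l = c * lsum f l.
Proof. induction l; rewrite ?lsum_nil, ?lsum_cons; [ring|]. rewrite IHl; ring. Qed.

Lemma lsum_const c l : lsum (fun _ => c) l = c * INR (length l).
Proof. induction l; rewrite ?lsum_nil, ?lsum_cons; simpl length; [simpl; ring|].
  rewrite IHl, S_INR; ring. Qed.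

Lemma lsum_le f g l : (forall x, In x l -> f x <= g x) -> lsum f l <= lsum g l.
Proof. induction l; intros H; rewrite ?lsum_nil, ?lsum_cons; [lra|].
  assert (f a <= g a) by (apply H; left; auto).
  assert (lsum f l <= lsum g l) by (apply IHl; intros; apply H; right; auto). lra. Qed.

Lemma lsum_swap (f : nat -> nat -> R) l1 l2 :
  lsum (fun x => lsum (fun y => f x y) l2) l1 = lsum (fun y => lsum (fun x => f x y) l1) l2.
Proof. induction l1; rewrite ?lsum_nil, ?lsum_cons.
  - transitivity (lsum (fun _ => 0) l2); [rewrite lsum_const; ring|].
    apply lsum_ext_in; intros. rewrite lsum_nil. ring.
  - rewrite IHl1, <- lsum_add. apply lsum_ext_in; intros. rewrite lsum_cons. ring. Qed.

Lemma lsum_nonzero f l : lsum f l <> 0 -> exists x, In x l /\ f x <> 0.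
Proof. induction l; rewrite ?lsum_nil, ?lsum_cons; intros H; [lra|].
  destruct (Req_dec (f a) 0) as [E|E].
  - destruct IHl as [x [Hx Hf]]; [lra|]. exists x; split; [right|]; auto.
  - exists a; split; [left|]; auto. Qed.

Lemma lsum_map f h l : lsum f (map h l) = lsum (fun x => f (h x)) l.
Proof. induction l; simpl map; rewrite ?lsum_nil, ?lsum_cons; auto. rewrite IHl; auto. Qed.

Lemma lsum_delta_seq k a s f :
  lsum (fun x => if Nat.eqb s x then f x else 0) (seq a k) =
  if andb (Nat.leb a s) (Nat.ltb s (a+k)) then f s else 0.
Proof. revert a; induction k; intros a; simpl seq; rewrite ?lsum_nil, ?lsum_cons.
  - destruct (Nat.leb_spec a s), (Nat.ltb_spec s (a+0)); simpl; auto; lia.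
  - rewrite IHk. destruct (Nat.eqb_spec s a); subst.
    + destruct (Nat.leb_spec (S a) a); [lia|]. destruct (Nat.leb_spec a a); [|lia].
      destruct (Nat.ltb_spec a (a + S k)); [|lia]. simpl; ring.
    + destruct (Nat.leb_spec (S a) s), (Nat.ltb_spec s (S a + k)),
       (Nat.leb_spec a s), (Nat.ltb_spec s (a + S k)); simpl; try lia; ring. Qed.

Lemma lsum_delta n s f :
  lsum (fun x => if Nat.eqb s x then f x else 0) (verts n) = if Nat.ltb s n then f s else 0.
Proof. unfold verts; rewrite lsum_delta_seq. simpl. reflexivity. Qed.

Lemma lsum_abs_bound f g l e : (forall x, In x l -> Rabs (f x - g x) <= e) ->
  Rabs (lsum f l - lsum g l) <= INR (length l) * e.
Proof. induction l; intros H; rewrite ?lsum_nil, ?lsum_cons; simpl length.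
  - simpl. rewrite Rminus_0_r, Rabs_R0; lra.
  - rewrite S_INR. replace (f a + lsum f l - (g a + lsum g l)) with ((f a - g a) + (lsum f l - lsum g l)) by ring.
    eapply Rle_trans; [apply Rabs_triang|].
    assert (Rabs (f a - g a) <= e) by (apply H; left; auto).
    assert (Rabs (lsum f l - lsum g l) <= INR (length l) * e) by (apply IHl; intros; apply H; right; auto).
    lra. Qed.

Lemma Rabs_le_inv a b : Rabs a <= b -> -b <= a <= b.
Proof. unfold Rabs; destruct (Rcase_abs a); lra. Qed.

Lemma lsum_wabs c f g l e : (forall x, In x l -> 0 <= c x) -> (forall x, In x l -> Rabs (f x - g x) <= e) ->
  Rabs (lsum (fun x => c x * f x) l - lsum (fun x => c x * g x) l) <= lsum c l * e.
Proof. intros Hc H. apply Rabs_le. split.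
  - assert (lsum (fun x => c x * g x) l <= lsum (fun x => c x * f x + e * c x) l).
    { apply lsum_le. intros x Hx. specialize (Hc x Hx). specialize (H x Hx).
      apply Rabs_le_inv in H. nra. }
    rewrite lsum_add, lsum_scale in H0. lra.
  - assert (lsum (fun x => c x * f x) l <= lsum (fun x => c x * g x + e * c x) l).
    { apply lsum_le. intros x Hx. specialize (Hc x Hx). specialize (H x Hx).
      apply Rabs_le_inv in H. nra. }
    rewrite lsum_add, lsum_scale in H0. lra. Qed.

Lemma lsumL_flat_map f (h : nat -> list (list nat)) l :
  lsumL f (flat_map h l) = lsum (fun x => lsumL f (h x)) l.
Proof. induction l; [reflexivity|]. simpl flat_map. rewrite lsum_cons, <- IHl.
  generalize (h a); intros m; induction m; simpl; [ring|]. unfold lsumL in *. rewrite IHm; ring. Qed.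

Lemma lsumL_map f h l : lsumL f (map h l) = lsumL (fun x => f (h x)) l.
Proof. induction l; simpl; auto. rewrite IHl; auto. Qed.

Lemma lsumL_scale c f l : lsumL (fun x => c * f x) l = c * lsumL f l.
Proof. induction l; simpl; [ring|]. rewrite IHl; ring. Qed.

Lemma lsumL_zero f l : (forall x, In x l -> f x = 0) -> lsumL f l = 0.
Proof. induction l; simpl; intros H; auto. rewrite H, IHl; auto. ring. Qed.

Lemma last_indep (a : nat) p d d' : last (a::p) d = last (a::p) d'.
Proof. revert a; induction p; intros b; [reflexivity|].
  change (last (a::p) d = last (a::p) d'). apply IHp. Qed.

Lemma last_cons_eq (z : nat) p x : last (z::p) x = last p z.
Proof. destruct p; simpl; auto. apply last_indep. Qed.

Lemma is_pathb_snoc E x p y : is_pathb E x p = true -> E (last p x) y = true ->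
  is_pathb E x (p ++ [y]) = true.
Proof. revert x; induction p; intros x H1 H2; simpl in *.
  - rewrite H2; auto.
  - apply andb_prop in H1; destruct H1 as [H1 H3]. rewrite H1; simpl.
    apply IHp; auto. rewrite <- last_cons_eq with (x:=x); auto. Qed.

Lemma is_pathb_app_l E x a b : is_pathb E x (a ++ b) = true -> is_pathb E x a = true.
Proof. revert x; induction a; intros x H; simpl in *; auto.
  apply andb_prop in H; destruct H as [H1 H2]. rewrite H1; simpl; eauto. Qed.

Lemma path_lt n E x p y : (forall x y, E x y = true -> (x < n)%nat /\ (y < n)%nat) ->
  is_pathb E x p = true -> In y p -> (y < n)%nat.
Proof. intros HE; revert x; induction p; intros x H Hy; simpl in *; [tauto|].
  apply andb_prop in H; destruct H as [H1 H2]. destruct Hy; subst.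
  - apply (HE x y); auto.
  - eauto. Qed.

Lemma path_nodup E x p : acyclic E -> is_pathb E x p = true -> NoDup p.
Proof. intros Hac; revert x; induction p; intros x H; simpl in *; [constructor|].
  apply andb_prop in H; destruct H as [H1 H2]. constructor; eauto.
  intros Hin. apply in_split in Hin. destruct Hin as [l1 [l2 Hl]]. subst.
  assert (Hp : is_pathb E a (l1 ++ [a]) = true).
  { apply is_pathb_app_l with (b:=l2). rewrite <- app_assoc; auto. }
  apply (Hac a (l1 ++ [a])); auto.
  - destruct l1; simpl; discriminate.
  - apply last_last. Qed.

Definition anc E y v := exists p, is_pathb E y p = true /\ last p y = v.

Lemma anc_refl E v : anc E v v.
Proof. exists []; simpl; auto. Qed.

Lemma anc_step E y x v : anc E y x -> E x v = true -> anc E y v.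
Proof. intros [p [H1 H2]] He. exists (p ++ [v]). split.
  - apply is_pathb_snoc; auto. rewrite H2; auto.
  - apply last_last. Qed.

Lemma no_back E x v : acyclic E -> E x v = true -> anc E v x -> False.
Proof. intros Hac He Ha. destruct (anc_step _ _ _ _ Ha He) as [p [H1 H2]].
  destruct Ha as [q [Hq1 Hq2]].
  apply (Hac v (q ++ [v])).
  - destruct q; simpl; discriminate.
  - apply is_pathb_snoc; auto. rewrite Hq2; auto.
  - apply last_last. Qed.

Lemma L_le_n n E L : (forall x y, E x y = true -> (x < n)%nat /\ (y < n)%nat) ->
  acyclic E -> longest_path_length E L -> (L <= n)%nat.
Proof. intros HE Hac [[x [p [H1 H2]]] _]. subst L.
  rewrite <- (length_seq n 0). apply NoDup_incl_length.
  - eapply path_nodup; eauto.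
  - intros y Hy. apply in_seq. split; [lia|]. simpl. eapply path_lt; eauto. Qed.

Definition Wm (E : nat -> nat -> bool) (w : nat -> nat -> R) x y := if E x y then w x y else 0.

Fixpoint Fm n E w (k s v : nat) : R :=
  match k with
  | O => if Nat.eqb s v then 1 else 0
  | S k' => lsum (fun x => Fm n E w k' s x * Wm E w x v) (verts n)
  end.

Lemma Fm_S n E w k s v : Fm n E w (S k) s v = lsum (fun x => Fm n E w k s x * Wm E w x v) (verts n).
Proof. reflexivity. Qed.

Lemma Wm_out n E w x y : (forall x y, E x y = true -> (x < n)%nat /\ (y < n)%nat) ->
  (n <= x \/ n <= y)%nat -> Wm E w x y = 0.
Proof. intros HE H. unfold Wm. destruct (E x y) eqn:Ex; auto. apply HE in Ex. lia. Qed.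

Lemma Fm_assoc n E w k s v : (forall x y, E x y = true -> (x < n)%nat /\ (y < n)%nat) ->
  Fm n E w (S k) s v = lsum (fun y => Wm E w s y * Fm n E w k y v) (verts n).
Proof. intros HE. revert s v; induction k; intros s v.
  - rewrite Fm_S. simpl Fm.
    transitivity (lsum (fun x => if Nat.eqb s x then Wm E w x v else 0) (verts n)).
    { apply lsum_ext_in; intros; destruct (Nat.eqb s x); ring. }
    symmetry.
    transitivity (lsum (fun x => if Nat.eqb v x then Wm E w s x else 0) (verts n)).
    { apply lsum_ext_in; intros. destruct (Nat.eqb_spec x v), (Nat.eqb_spec v x); subst; try lia; ring. }
    rewrite !lsum_delta. destruct (Nat.ltb_spec v n), (Nat.ltb_spec s n); auto;
      rewrite (Wm_out n E w s v HE) by lia; reflexivity.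
  - rewrite Fm_S.
    transitivity (lsum (fun x => lsum (fun y => Wm E w s y * (Fm n E w k y x * Wm E w x v)) (verts n)) (verts n)).
    { apply lsum_ext_in; intros. rewrite IHk. rewrite Rmult_comm, <- lsum_scale.
      apply lsum_ext_in; intros; ring. }
    rewrite lsum_swap. apply lsum_ext_in; intros. rewrite Fm_S, <- lsum_scale. auto. Qed.

Lemma Fm_path n E w k s v : Fm n E w k s v <> 0 ->
  exists p, is_pathb E s p = true /\ length p = k /\ last p s = v.
Proof. revert v; induction k; intros v H.
  - simpl in H. destruct (Nat.eqb_spec s v); [|lra]. subst. exists []; simpl; auto.
  - rewrite Fm_S in H. apply lsum_nonzero in H. destruct H as [x [_ Hx]].
    destruct (Req_dec (Fm n E w k s x) 0) as [Z|Z]; [rewrite Z in Hx; lra|].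
    unfold Wm in Hx. destruct (E x v) eqn:Ex; [|lra].
    destruct (IHk x Z) as [p [H1 [H2 H3]]]. exists (p ++ [v]). split; [|split].
    + apply is_pathb_snoc; auto. rewrite H3; auto.
    + rewrite length_app; simpl; lia.
    + apply last_last. Qed.

Lemma Fm_uu n E w k u : acyclic E -> (1 <= k)%nat -> Fm n E w k u u = 0.
Proof. intros Hac Hk. destruct (Req_dec (Fm n E w k u u) 0) as [Z|Z]; auto.
  destruct (Fm_path _ _ _ _ _ _ Z) as [p [H1 [H2 H3]]]. exfalso.
  apply (Hac u p); auto. destruct p; simpl in *; [lia|discriminate]. Qed.

Definition Tm n E w k s := lsumL (fun p => if is_pathb E s p then path_weight w s p else 0) (all_lists n k).

Lemma Tm_0 n E w s : Tm n E w 0 s = 1.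
Proof. unfold Tm; simpl. ring. Qed.

Lemma Tm_S n E w k s : Tm n E w (S k) s = lsum (fun v => Wm E w s v * Tm n E w k v) (verts n).
Proof. unfold Tm. simpl all_lists. rewrite lsumL_flat_map. apply lsum_ext_in; intros v _.
  rewrite lsumL_map. simpl is_pathb. unfold Wm. destruct (E s v).
  - rewrite <- lsumL_scale. f_equal. extensionality p. simpl. destruct (is_pathb E v p); ring.
  - rewrite lsumL_zero; [ring|]. intros; simpl; auto. Qed.

Lemma all_lists_len n k p : In p (all_lists n k) -> length p = k.
Proof. revert p; induction k; intros p H; simpl in H.
  - destruct H as [H|H]; [subst; auto|tauto].
  - apply in_flat_map in H. destruct H as [v [_ H]]. apply in_map_iff in H.
    destruct H as [q [Hq1 Hq2]]. subst. simpl. rewrite IHk; auto. Qed.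

Lemma Tm_big n E w L k s : longest_path_length E L -> (L < k)%nat -> Tm n E w k s = 0.
Proof. intros [_ HL] Hk. unfold Tm. apply lsumL_zero. intros p Hp.
  destruct (is_pathb E s p) eqn:Hs; auto. apply HL in Hs. apply all_lists_len in Hp. lia. Qed.

Lemma Tm_Fm n E w k s : (forall x y, E x y = true -> (x < n)%nat /\ (y < n)%nat) ->
  (s < n)%nat -> Tm n E w k s = lsum (fun v => Fm n E w k s v) (verts n).
Proof. intros HE; revert s; induction k; intros s Hs.
  - rewrite Tm_0. simpl Fm. rewrite lsum_delta. destruct (Nat.ltb_spec s n); auto; lia.
  - rewrite Tm_S.
    transitivity (lsum (fun y => lsum (fun v => Wm E w s y * Fm n E w k y v) (verts n)) (verts n)).
    { apply lsum_ext_in; intros y Hy. rewrite IHk, lsum_scale; auto.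
      unfold verts in Hy; apply in_seq in Hy; lia. }
    rewrite lsum_swap. apply lsum_ext_in; intros. rewrite Fm_assoc; auto. Qed.

Lemma easyim_T n E w k s : easyim n E w k s = lsum (fun j => Tm n E w j s) (seq 1 k).
Proof. revert s; induction k; intros s; [reflexivity|].
  simpl easyim. change (seq 1 (S k)) with (1%nat :: seq 2 k). rewrite lsum_cons.
  rewrite <- seq_shift, lsum_map.
  transitivity (lsum (fun v => Wm E w s v * Tm n E w 0 v + Wm E w s v * lsum (fun j => Tm n E w j v) (seq 1 k)) (verts n)).
  { apply lsum_ext_in; intros. rewrite Tm_0, <- IHk. unfold Wm. destruct (E s x); ring. }
  rewrite lsum_add, Tm_S. f_equal.
  transitivity (lsum (fun v => lsum (fun j => Wm E w s v * Tm n E w j v) (seq 1 k)) (verts n)).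
  { apply lsum_ext_in; intros. rewrite lsum_scale; auto. }
  rewrite lsum_swap. apply lsum_ext_in; intros. rewrite Tm_S. auto. Qed.

Lemma seq1_trunc (f : nat -> R) L k : (L <= k)%nat -> (forall j, (L < j)%nat -> f j = 0) ->
  lsum f (seq 1 k) = lsum f (seq 1 L).
Proof. intros Hk Hf. replace k with (L + (k - L))%nat by lia. rewrite seq_app, lsum_app.
  rewrite (lsum_ext_in f (fun _ => 0) (seq (1+L) (k-L))). rewrite lsum_const; ring.
  intros x Hx. apply in_seq in Hx. apply Hf. lia. Qed.

Fixpoint Bm n E w u k v : R :=
  match k with
  | O => if Nat.eqb v u then 1 else 0
  | S k' => if Nat.eqb v u then 1 else lsum (fun x => Wm E w x v * Bm n E w u k' x) (verts n)
  end.

Lemma Bm_Fm n E w u k v : acyclic E ->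
  Bm n E w u k v = lsum (fun j => Fm n E w j u v) (seq 0 (S k)).
Proof. intros Hac. revert v; induction k; intros v.
  - simpl. rewrite Nat.eqb_sym. ring.
  - change (seq 0 (S (S k))) with (0%nat :: seq 1 (S k)). rewrite lsum_cons.
    simpl Bm. simpl Fm at 1. destruct (Nat.eqb_spec v u).
    + subst. rewrite Nat.eqb_refl. rewrite (lsum_ext_in _ (fun _ => 0)).
      rewrite lsum_const; ring. intros j Hj. apply in_seq in Hj. apply Fm_uu; auto; lia.
    + destruct (Nat.eqb_spec u v); [congruence|].
      rewrite <- seq_shift, lsum_map.
      transitivity (lsum (fun x => lsum (fun j => Fm n E w j u x * Wm E w x v) (seq 0 (S k))) (verts n)).
      { apply lsum_ext_in; intros. rewrite IHk, <- lsum_scale. apply lsum_ext_in; intros; ring. }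
      rewrite lsum_swap. rewrite Rplus_0_l. apply lsum_ext_in; intros. rewrite Fm_S; auto. Qed.

Lemma target_eq n E w L u l : (forall x y, E x y = true -> (x < n)%nat /\ (y < n)%nat) ->
  acyclic E -> longest_path_length E L -> (L <= l)%nat -> (u < n)%nat ->
  easyim n E w l u = lsum (fun v => if Nat.eqb v u then 0 else Bm n E w u n v) (verts n)
  /\ easyim n E w l u = path_sum n E w L u.
Proof. intros HE Hac HL Hl Hu.
  assert (Hz : forall j, (L < j)%nat -> Tm n E w j u = 0) by (intros; eapply Tm_big; eauto).
  assert (H1 : easyim n E w l u = path_sum n E w L u).
  { rewrite easyim_T. rewrite (seq1_trunc _ L l); auto. }
  split; auto. rewrite H1. unfold path_sum. fold (Tm n E w).
  change (lsum (fun k => Tm n E w k u) (seq 1 L) = lsum (fun v => if Nat.eqb v u then 0 else Bm n E w u n v) (verts n)).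
  rewrite <- (seq1_trunc _ L n); auto; [|eapply L_le_n; eauto].
  transitivity (lsum (fun j => lsum (fun v => Fm n E w j u v) (verts n)) (seq 1 n)).
  { apply lsum_ext_in; intros. apply Tm_Fm; auto. }
  rewrite lsum_swap. apply lsum_ext_in; intros v _.
  rewrite Bm_Fm; auto. change (seq 0 (S n)) with (0%nat :: seq 1 n). rewrite lsum_cons.
  simpl Fm. destruct (Nat.eqb_spec v u).
  - subst. rewrite (lsum_ext_in _ (fun _ => 0)). rewrite lsum_const; ring.
    intros j Hj. apply in_seq in Hj. apply Fm_uu; auto; lia.
  - destruct (Nat.eqb_spec u v); [congruence|]. ring. Qed.

Definition upd (g : nat -> nat) v j := fun y => if Nat.eqb y v then j else g y.

Lemma GS_S N m F : grid_sum N (S m) F = grid_sum N m (fun g => lsum (fun k => F (upd g m k)) (seq 0 N)).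
Proof. reflexivity. Qed.

Lemma GS_ext N m F G : (forall g, F g = G g) -> grid_sum N m F = grid_sum N m G.
Proof. intros H. replace G with F; auto. extensionality g; auto. Qed.

Lemma GS_add N m : forall F G, grid_sum N m (fun g => F g + G g) = grid_sum N m F + grid_sum N m G.
Proof. induction m; intros F G; [reflexivity|]. rewrite !GS_S, <- IHm. apply GS_ext; intros g.
  apply lsum_add. Qed.

Lemma GS_const N m c : grid_sum N m (fun _ => c) = c * INR N ^ m.
Proof. revert c; induction m; intros c; [simpl; ring|]. rewrite GS_S.
  rewrite (GS_ext _ _ _ (fun _ => c * INR N)). rewrite IHm; simpl; ring.
  intros; rewrite lsum_const, length_seq; auto. Qed.

Lemma GS_le N m : forall F G, (forall g, F g <= G g) -> grid_sum N m F <= grid_sum N m G.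
Proof. induction m; intros F G H; [apply H|]. rewrite !GS_S. apply IHm. intros g.
  apply lsum_le; intros; apply H. Qed.

Lemma upd_same g v j k : upd (upd g v j) v k = upd g v k.
Proof. extensionality y; unfold upd. destruct (Nat.eqb y v); auto. Qed.

Lemma upd_comm g v j m k : v <> m -> upd (upd g v j) m k = upd (upd g m k) v j.
Proof. intros H. extensionality y; unfold upd.
  destruct (Nat.eqb_spec y m), (Nat.eqb_spec y v); subst; auto; lia. Qed.

Lemma GS_avg N : (0 < N)%nat -> forall m F v, (v < m)%nat ->
  grid_sum N m F = grid_sum N m (fun g => lsum (fun j => F (upd g v j)) (seq 0 N) / INR N).
Proof. intros HN. assert (0 < INR N) by (apply lt_0_INR; auto).
  induction m; intros F v Hv; [lia|]. rewrite !GS_S. destruct (Nat.eq_dec v m).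
  - subst. apply GS_ext; intros g. symmetry.
    rewrite (lsum_ext_in _ (fun _ => lsum (fun k => F (upd g m k)) (seq 0 N) / INR N)).
    rewrite lsum_const, length_seq. field. lra.
    intros; f_equal. apply lsum_ext_in; intros; rewrite upd_same; auto.
  - rewrite (IHm (fun g => lsum (fun k => F (upd g m k)) (seq 0 N)) v) by lia.
    apply GS_ext; intros g. cbv beta.
    transitivity (lsum (fun j => lsum (fun k => / INR N * F (upd (upd g v j) m k)) (seq 0 N)) (seq 0 N)).
    { unfold Rdiv. rewrite Rmult_comm, <- lsum_scale. apply lsum_ext_in; intros.
      rewrite lsum_scale; auto. }
    rewrite lsum_swap. apply lsum_ext_in; intros k _.
    rewrite lsum_scale. unfold Rdiv. rewrite Rmult_comm. f_equal.
    apply lsum_ext_in; intros. rewrite upd_comm; auto. Qed.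

Lemma GS_lsum N m (F : nat -> (nat -> nat) -> R) l :
  grid_sum N m (fun g => lsum (fun x => F x g) l) = lsum (fun x => grid_sum N m (F x)) l.
Proof. induction l.
  - rewrite lsum_nil. rewrite (GS_ext _ _ _ (fun _ => 0)) by reflexivity. rewrite GS_const; ring.
  - rewrite lsum_cons. rewrite (GS_ext _ _ _ (fun g => F a g + lsum (fun x => F x g) l)) by reflexivity.
    rewrite GS_add, IHl; auto. Qed.

Definition Avg N n (F : (nat -> nat) -> R) := grid_sum N n F / INR N ^ n.


Lemma powpos N n : (0 < N)%nat -> 0 < INR N ^ n.
Proof. intros; apply pow_lt, lt_0_INR; auto. Qed.

Lemma Avg_ext N n F G : (forall g, F g = G g) -> Avg N n F = Avg N n G.
Proof. intros; unfold Avg; rewrite (GS_ext _ _ F G); auto. Qed.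

Lemma Avg_const N n c : (0 < N)%nat -> Avg N n (fun _ => c) = c.
Proof. intros H; unfold Avg; rewrite GS_const. field. apply Rgt_not_eq, powpos; auto. Qed.

Lemma Avg_add N n F G : Avg N n (fun g => F g + G g) = Avg N n F + Avg N n G.
Proof. unfold Avg; rewrite GS_add; unfold Rdiv; ring. Qed.

Lemma Avg_scale N n c F : Avg N n (fun g => c * F g) = c * Avg N n F.
Proof. unfold Avg. rewrite (GS_ext _ _ _ (fun g => c * F g + 0 * F g)) by (intros; ring).
  rewrite GS_add.
  assert (forall G : (nat -> nat) -> R, forall c, grid_sum N n (fun g => c * G g) = c * grid_sum N n G).
  { clear. induction n; intros G c; [reflexivity|]. rewrite !GS_S, <- IHn. apply GS_ext; intros.
    apply lsum_scale. }
  rewrite !H. unfold Rdiv; ring. Qed.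

Lemma Avg_le N n F G : (0 < N)%nat -> (forall g, F g <= G g) -> Avg N n F <= Avg N n G.
Proof. intros HN H. unfold Avg, Rdiv. apply Rmult_le_compat_r.
  - left; apply Rinv_0_lt_compat, powpos; auto.
  - apply GS_le; auto. Qed.

Lemma Avg_abs N n F G e : (0 < N)%nat -> (forall g, Rabs (F g - G g) <= e) -> Rabs (Avg N n F - Avg N n G) <= e.
Proof. intros HN H. apply Rabs_le. split.
  - assert (Avg N n G <= Avg N n (fun g => F g + e)).
    { apply Avg_le; auto. intros g; specialize (H g); apply Rabs_le_inv in H; lra. }
    rewrite Avg_add, Avg_const in H0; auto. lra.
  - assert (Avg N n F <= Avg N n (fun g => G g + e)).
    { apply Avg_le; auto. intros g; specialize (H g); apply Rabs_le_inv in H; lra. }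
    rewrite Avg_add, Avg_const in H0; auto. lra. Qed.

Lemma Avg_lsum N n (F : nat -> (nat -> nat) -> R) l :
  Avg N n (fun g => lsum (fun x => F x g) l) = lsum (fun x => Avg N n (F x)) l.
Proof. unfold Avg. rewrite GS_lsum. unfold Rdiv. rewrite Rmult_comm, <- lsum_scale.
  apply lsum_ext_in; intros; ring. Qed.

Definition cnt M x := lsum (fun j => if Rle_dec (2 * INR j + 1) x then 1 else 0) (seq 0 M).

Lemma cnt_S M x : cnt (S M) x = cnt M x + (if Rle_dec (2 * INR M + 1) x then 1 else 0).
Proof. unfold cnt. rewrite seq_S, lsum_app, lsum_cons, lsum_nil. simpl. ring. Qed.

Lemma cnt_le M x : cnt M x <= INR M.
Proof. induction M; [unfold cnt; simpl; lra|]. rewrite cnt_S, S_INR. destruct Rle_dec; lra. Qed.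

Lemma cnt_up M x : -1 <= x -> cnt M x <= (x+1)/2.
Proof. intros Hx. induction M; [unfold cnt; simpl; lra|]. rewrite cnt_S.
  pose proof (cnt_le M x). destruct Rle_dec; lra. Qed.

Lemma cnt_lo M x : INR M <= cnt M x \/ (x-1)/2 <= cnt M x.
Proof. induction M; [left; unfold cnt; simpl; lra|]. rewrite cnt_S, S_INR.
  destruct Rle_dec; destruct IHM; [left|right|right|right]; lra. Qed.

Lemma cnt_bound N a : (0 < N)%nat -> 0 <= a <= 1 ->
  Rabs (cnt N (2 * INR N * a) / INR N - a) <= 1 / INR N.
Proof. intros HN Ha. assert (HNp : 0 < INR N) by (apply lt_0_INR; auto).
  set (c := cnt N (2 * INR N * a)).
  assert (H1 : c <= INR N * a + 1/2).
  { pose proof (cnt_up N (2 * INR N * a)). unfold c. nra. }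
  assert (H2 : INR N * a - 1/2 <= c).
  { destruct (cnt_lo N (2 * INR N * a)); unfold c; nra. }
  set (iN := / INR N). assert (0 < iN) by (apply Rinv_0_lt_compat; auto).
  assert (INR N * iN = 1) by (unfold iN; field; lra).
  unfold Rdiv. fold iN. rewrite Rmult_1_l.
  apply Rabs_le. split; nra. Qed.

Definition theta (N : nat) (g : nat -> nat) : nat -> R := fun v => (2 * INR (g v) + 1) / (2 * INR N).
Definition act n E w N u k g := lt_active n E w (theta N g) (fun x => Nat.eqb x u) k.
Definition indr (b : bool) : R := if b then 1 else 0.
Definition Sw n E w N u k g v := in_active_weight n E w (act n E w N u k g) v.

Lemma act_S n E w N u k g v : act n E w N u (S k) g v =
  orb (act n E w N u k g v) (if Rle_dec (theta N g v) (Sw n E w N u k g v) then true else false).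
Proof. reflexivity. Qed.

Lemma Sw_eq n E w N u k g v : Sw n E w N u k g v = lsum (fun x => Wm E w x v * indr (act n E w N u k g x)) (verts n).
Proof. unfold Sw, in_active_weight. apply lsum_ext_in; intros. unfold Wm, indr.
  destruct (E x v), (act n E w N u k g x); simpl; ring. Qed.

Lemma Wm_nonneg E w x y : (forall x y, E x y = true -> 0 <= w x y) -> 0 <= Wm E w x y.
Proof. intros H; unfold Wm. destruct (E x y) eqn:Ex; [apply H; auto|lra]. Qed.

Lemma Sw_mono n E w N u k g v : (forall x y, E x y = true -> 0 <= w x y) ->
  Sw n E w N u k g v <= Sw n E w N u (S k) g v.
Proof. intros Hw. rewrite !Sw_eq. apply lsum_le; intros x _.
  pose proof (Wm_nonneg E w x v Hw). unfold indr.
  destruct (act n E w N u k g x) eqn:A.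
  - rewrite act_S, A; simpl; lra.
  - destruct (act n E w N u (S k) g x); lra. Qed.

Lemma act_u n E w N u k g : act n E w N u k g u = true.
Proof. induction k; [unfold act; simpl; apply Nat.eqb_refl|]. rewrite act_S, IHk; auto. Qed.

Lemma act_nonseed n E w N u k g v : (forall x y, E x y = true -> 0 <= w x y) -> v <> u ->
  act n E w N u (S k) g v = if Rle_dec (theta N g v) (Sw n E w N u k g v) then true else false.
Proof. intros Hw Hv. induction k.
  - rewrite act_S. unfold act at 1; simpl. destruct (Nat.eqb_spec v u); [congruence|]. auto.
  - rewrite act_S, IHk. pose proof (Sw_mono n E w N u k g v Hw).
    destruct (Rle_dec (theta N g v) (Sw n E w N u k g v)),
      (Rle_dec (theta N g v) (Sw n E w N u (S k) g v)); simpl; auto; lra. Qed.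

Lemma act_local n E w N u k : forall v g g', (forall y, anc E y v -> g y = g' y) ->
  act n E w N u k g v = act n E w N u k g' v.
Proof. induction k; intros v g g' H; [reflexivity|].
  rewrite !act_S. rewrite (IHk v g g' H).
  assert (theta N g v = theta N g' v) by (unfold theta; rewrite (H v (anc_refl E v)); auto).
  rewrite H0. f_equal.
  assert (Sw n E w N u k g v = Sw n E w N u k g' v).
  { unfold Sw, in_active_weight. apply lsum_ext_in; intros x _.
    destruct (E x v) eqn:Ex; simpl; auto. rewrite (IHk x g g'); auto.
    intros y Hy; apply H. eapply anc_step; eauto. }
  rewrite H1; auto. Qed.

Lemma Sw_upd n E w N u k g v j : acyclic E ->
  Sw n E w N u k (upd g v j) v = Sw n E w N u k g v.
Proof. intros Hac. unfold Sw, in_active_weight. apply lsum_ext_in; intros x _.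
  destruct (E x v) eqn:Ex; simpl; auto. rewrite (act_local n E w N u k x (upd g v j) g); auto.
  intros y Hy. unfold upd. destruct (Nat.eqb_spec y v); auto. subst. exfalso.
  eapply no_back; eauto. Qed.

Lemma Sw_range n E w N u k g v : (forall x y, E x y = true -> 0 <= w x y) ->
  (lsum (fun x => if E x v then w x v else 0) (verts n) <= 1) ->
  0 <= Sw n E w N u k g v <= 1.
Proof. intros Hw H1. rewrite Sw_eq. split.
  - rewrite <- (Rmult_0_l (INR (length (verts n)))), <- lsum_const. apply lsum_le; intros.
    pose proof (Wm_nonneg E w x v Hw). unfold indr; destruct act; lra.
  - eapply Rle_trans; [|apply H1]. apply lsum_le; intros.
    pose proof (Wm_nonneg E w x v Hw). unfold indr, Wm in *; destruct act; destruct (E x v); lra. Qed.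

Lemma main_bound n E w u N :
    (forall x y, E x y = true -> (x < n)%nat /\ (y < n)%nat) ->
    (forall x y, E x y = true -> 0 <= w x y) ->
    (forall v, (v < n)%nat ->
       lsum (fun x => if E x v then w x v else 0) (verts n) <= 1) ->
    acyclic E -> (0 < N)%nat ->
  forall k v, (v < n)%nat ->
  Rabs (Avg N n (fun g => indr (act n E w N u k g v)) - Bm n E w u k v) <= INR k / INR N.
Proof. intros HE Hw Hin Hac HN. assert (HNp : 0 < INR N) by (apply lt_0_INR; auto).
  induction k; intros v Hv.
  - unfold act; simpl lt_active. rewrite Avg_const by auto. simpl Bm. unfold indr.
    destruct (Nat.eqb v u); simpl; unfold Rdiv; rewrite Rmult_0_l, Rminus_diag, Rabs_R0; lra.
  - destruct (Nat.eqb_spec v u).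
    + subst. rewrite (Avg_ext _ _ _ (fun _ => 1)) by (intros; rewrite act_u; auto).
      rewrite Avg_const by auto. simpl Bm. rewrite Nat.eqb_refl, Rminus_diag, Rabs_R0.
      apply Rlt_le, Rdiv_lt_0_compat; auto. apply lt_0_INR; lia.
    + assert (Hb : Bm n E w u (S k) v = lsum (fun x => Wm E w x v * Bm n E w u k x) (verts n)).
      { simpl. destruct (Nat.eqb_spec v u); [congruence|auto]. }
      rewrite Hb.
      assert (HA : Avg N n (fun g => indr (act n E w N u (S k) g v)) =
                   Avg N n (fun g => cnt N (2 * INR N * Sw n E w N u k g v) / INR N)).
      { unfold Avg. f_equal. rewrite (GS_avg N HN n _ v Hv). apply GS_ext; intros g. f_equal.
        unfold cnt. apply lsum_ext_in; intros j _.
        rewrite act_nonseed by auto. rewrite Sw_upd by auto.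
        unfold theta, upd. rewrite Nat.eqb_refl. unfold indr.
        set (a := Sw n E w N u k g v).
        set (t := (2 * INR j + 1) / (2 * INR N)).
        assert (t * (2 * INR N) = 2 * INR j + 1) by (unfold t; field; lra).
        destruct (Rle_dec t a), (Rle_dec (2 * INR j + 1) (2 * INR N * a)); auto; nra. }
      rewrite HA.
      assert (HS : Avg N n (fun g => Sw n E w N u k g v) =
                   lsum (fun x => Wm E w x v * Avg N n (fun g => indr (act n E w N u k g x))) (verts n)).
      { rewrite (Avg_ext _ _ _ (fun g => lsum (fun x => Wm E w x v * indr (act n E w N u k g x)) (verts n)))
          by (intros; apply Sw_eq).
        rewrite Avg_lsum. apply lsum_ext_in; intros. apply Avg_scale. }
      assert (H1 : Rabs (Avg N n (fun g => cnt N (2 * INR N * Sw n E w N u k g v) / INR N)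
                         - Avg N n (fun g => Sw n E w N u k g v)) <= 1 / INR N).
      { apply Avg_abs; auto. intros g. apply cnt_bound; auto. apply Sw_range; auto. }
      assert (H2 : Rabs (lsum (fun x => Wm E w x v * Avg N n (fun g => indr (act n E w N u k g x))) (verts n)
                         - lsum (fun x => Wm E w x v * Bm n E w u k x) (verts n))
                   <= lsum (fun x => Wm E w x v) (verts n) * (INR k / INR N)).
      { apply lsum_wabs. intros; apply Wm_nonneg; auto.
        intros x Hx. apply IHk. unfold verts in Hx; apply in_seq in Hx; lia. }
      assert (H3 : 0 <= lsum (fun x => Wm E w x v) (verts n) <= 1).
      { split. rewrite <- (Rmult_0_l (INR (length (verts n)))), <- lsum_const. apply lsum_le; intros.
        apply Wm_nonneg; auto. apply Hin; auto. }
      assert (H4 : 0 <= INR k / INR N) by (unfold Rdiv; apply Rmult_le_pos; [apply pos_INR|left; apply Rinv_0_lt_compat; auto]).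
      rewrite HS in H1.
      assert (H5 : lsum (fun x => Wm E w x v) (verts n) * (INR k / INR N) <= INR k / INR N) by nra.
      rewrite S_INR. replace ((INR k + 1) / INR N) with (1 / INR N + INR k / INR N) by (field; lra).
      eapply Rle_trans; [|apply Rplus_le_compat; [apply H1|eapply Rle_trans; [apply H2|apply H5]]].
      replace (Avg N n (fun g => cnt N (2 * INR N * Sw n E w N u k g v) / INR N) -
               lsum (fun x => Wm E w x v * Bm n E w u k x) (verts n))
        with ((Avg N n (fun g => cnt N (2 * INR N * Sw n E w N u k g v) / INR N) -
               lsum (fun x => Wm E w x v * Avg N n (fun g => indr (act n E w N u k g x))) (verts n)) +
              (lsum (fun x => Wm E w x v * Avg N n (fun g => indr (act n E w N u k g x))) (verts n) -
               lsum (fun x => Wm E w x v * Bm n E w u k x) (verts n))) by ring.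
      apply Rabs_triang. Qed.

Theorem mainTheorem7 :
  forall (n : nat) (E : nat -> nat -> bool) (w : nat -> nat -> R) (L : nat),
    (forall x y, E x y = true -> (x < n)%nat /\ (y < n)%nat) ->
    (forall x y, E x y = true -> 0 <= w x y) ->
    (forall v, (v < n)%nat ->
       lsum (fun x => if E x v then w x v else 0) (verts n) <= 1) ->
    acyclic E ->
    longest_path_length E L ->
    forall (l u : nat), (L <= l)%nat -> (u < n)%nat ->
      sigma_is n E w (fun x => Nat.eqb x u) (easyim n E w l u) /\
      easyim n E w l u = path_sum n E w L u.
Proof.
  intros n E w L HE Hw Hin Hac HL l u Hl Hu.
  destruct (target_eq n E w L u l HE Hac HL Hl Hu) as [T1 T2].
  split; auto. rewrite T1. clear T1 T2.
  assert (Hb : forall N, (0 < N)%nat ->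
    Rabs (cube_riemann n N (lt_spread n E w (fun x => Nat.eqb x u)) -
          lsum (fun v => if Nat.eqb v u then 0 else Bm n E w u n v) (verts n)) <= INR n * (INR n / INR N)).
  { intros N HN.
    replace (cube_riemann n N (lt_spread n E w (fun x => Nat.eqb x u)))
      with (Avg N n (fun g => lsum (fun v => indr (andb (act n E w N u n g v) (negb (Nat.eqb v u)))) (verts n)))
      by reflexivity.
    rewrite Avg_lsum. replace (INR n * (INR n / INR N)) with (INR (length (verts n)) * (INR n / INR N))
      by (unfold verts; rewrite length_seq; auto). apply lsum_abs_bound.
    intros v Hv. unfold verts in Hv; apply in_seq in Hv.
    destruct (Nat.eqb_spec v u).
    - rewrite (Avg_ext _ _ _ (fun _ => 0)) by (intros; unfold indr; rewrite andb_false_r; auto).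
      rewrite Avg_const, Rminus_diag, Rabs_R0 by auto.
      apply Rmult_le_pos; [apply pos_INR|left; apply Rinv_0_lt_compat, lt_0_INR; auto].
    - rewrite (Avg_ext _ _ _ (fun g => indr (act n E w N u n g v))) by (intros; rewrite andb_true_r; auto).
      apply main_bound; auto; lia. }
  intros eps Heps.
  destruct (INR_unbounded (INR n * INR n / eps)) as [N0 HN0].
  exists N0. intros m Hm. unfold R_dist.
  eapply Rle_lt_trans; [apply Hb; lia|].
  assert (HS : INR N0 <= INR (S m)) by (apply le_INR; lia).
  assert (Hp : 0 < INR (S m)) by (apply lt_0_INR; lia).
  assert (INR n * INR n / eps < INR (S m)) by lra.
  assert (INR n * INR n < eps * INR (S m)).
  { apply (Rmult_lt_compat_r eps) in H; auto. unfold Rdiv in H.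
    rewrite Rmult_assoc, Rinv_l, Rmult_1_r in H by lra. lra. }
  replace (INR n * (INR n / INR (S m))) with ((INR n * INR n) * / INR (S m)) by (field; lra).
  apply (Rmult_lt_reg_r (INR (S m))); auto.
  rewrite Rmult_assoc, Rinv_l, Rmult_1_r by lra. lra.
Qed.
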